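(* Let $L$ be a Lipschitz language, let $\mu$ be an ultracharge on a nonempty set $I$, let $(M_i)_{i\in I}$ be $L$-structures, and let $M=\prod_\mu M_i$ be their ultramean. Then for every affine $L$-formula $\phi(x_1,\dots,x_n)$ and all $[a^1_i],\dots,[a^n_i]\in M$, $$\phi^{M}([a^{1}_{i}],\ldots,[a^{n}_{i}])=\int\phi^{M_{i}}(a^{1}_{i},\ldots,a^{n}_{i})\,d\mu .$$
   Context: A Lipschitz language $L$ consists of constant symbols, function symbols and relation symbols; each function symbol $F$ (resp. relation symbol $R$) has an arity $n\ge 1$ and a Lipschitz constant $\lambda_F\ge0$ (resp. $\lambda_R\ge 0$); $L$ contains a binary relation symbol $d$ with $\lambda_d=1$. An $L$-structure is a complete metric space $(M,d)$ of diameter at most $1$ (with $d$ interpreting the symbol $d$) together with elements $c^M$ for constants, maps $F^M:M^n\to M$ with $d(F^M(\bar a),F^M(\bar b))\le\lambda_F d(\bar a,\bar b)$ and maps $R^M:M^n\to[0,1]$ with $R^M(\bar a)-R^M(\bar b)\le\lambda_R d(\bar a,\bar b)$, where $d(\bar a,\bar b)=\sum_i d(a_i,b_i)$ on $M^n$. Affine formulas are built from the atomic formulas $1$, $d(t_1,t_2)$, $R(t_1,\dots,t_n)$ ($t_j$ terms) by $\phi+\psi$, $r\phi$ ($r\in\mathbb R$), $\sup_x\phi$, $\inf_x\phi$; their values $\phi^M(\bar a)\in\mathbb R$ are defined in the evident way (sup/inf taken over $M$); the same definition of values applies to structures whose metric is only a pseudometric or not complete. An ultracharge on $I$ is a finitely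 additive probability measure on the full power set of $I$; every bounded real function on $I$ is integrable with respect to it. The ultramean $M=\prod_\mu M_i$: on $\prod_i M_i$ put the pseudometric $d((a_i),(b_i))=\int d_i(a_i,b_i)\,d\mu$, let $[a_i]$ denote the class of $(a_i)$ modulo distance $0$, let $M$ be the set of classes with the induced metric, and set $c^M=[c^{M_i}]$, $F^M([a^1_i],\dots,[a^n_i])=[F^{M_i}(a^1_i,\dots,a^n_i)]$, $R^M([a^1_i],\dots,[a^n_i])=\int R^{M_i}(a^1_i,\dots,a^n_i)\,d\mu$ (these are well defined; $M$ need not be metrically complete). *)

(* Defs.v *)
From HB Require Import structures.
From mathcomp Require Import all_boot all_order all_algebra.
From mathcomp Require Import boolp classical_sets reals.
Set Implicit Arguments. Unset Strict Implicit. Unset Printing Implicit Defensive.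
Import Order.TTheory GRing.Theory Num.Theory.
Local Open Scope classical_set_scope.
Local Open Scope ring_scope.

Record ultracharge (R : realType) (I : Type) := Ultracharge {
  uc_mes :> set I -> R;
  uc_ge0 : forall A, 0 <= uc_mes A;
  uc_setT : uc_mes [set: I] = 1;
  uc_add : forall A B, A `&` B = set0 -> uc_mes (A `|` B) = uc_mes A + uc_mes B
}.

Definition is_partition (I : Type) (n : nat) (A : 'I_n -> set I) : Prop :=
  (forall k l : 'I_n, k != l -> A k `&` A l = set0) /\
  (forall i : I, exists k : 'I_n, A k i).

Definition integral (R : realType) (I : Type) (mu : ultracharge R I)
    (f : I -> R) : R :=
  sup [set s | exists (n : nat) (A : 'I_n -> set I) (c : 'I_n -> R),
      [/\ is_partition A,
          (forall (k : 'I_n) (i : I), A k i -> c k <= f i) &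
          s = \sum_(k < n) c k * mu (A k)]].

(** The distinguished binary symbol d is built in (see formula Fdist). *)
Record language (R : realType) := Language {
  const_sym : Type;
  func_sym : Type;
  rel_sym : Type;
  farity : func_sym -> nat;
  rarity : rel_sym -> nat;
  flip : func_sym -> R;
  rlip : rel_sym -> R;
  farity_pos : forall F, (0 < farity F)%N;
  rarity_pos : forall P, (0 < rarity P)%N;
  flip_ge0 : forall F, 0 <= flip F;
  rlip_ge0 : forall P, 0 <= rlip P
}.

(** Pre-structures: interpretations of all symbols, no axioms
    (used for the ultramean, whose metric need not be complete). *)
Record prestructure (R : realType) (L : language R) := Prestructure {
  carrier : Type;
  pdist : carrier -> carrier -> R;
  cinterp : const_sym L -> carrier;
  finterp : forall F : func_sym L, ('I_(farity F) -> carrier) -> carrier;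
  rinterp : forall P : rel_sym L, ('I_(rarity P) -> carrier) -> R
}.

Arguments pdist {R L} p.
Arguments cinterp {R L} p.
Arguments finterp {R L} p F.
Arguments rinterp {R L} p P.

Arguments carrier {R L} p.
Definition tdist (R : realType) (L : language R) (M : prestructure L) (n : nat)
  (a b : 'I_n -> carrier M) : R := \sum_(k < n) pdist M (a k) (b k).

Definition is_structure (R : realType) (L : language R) (M : prestructure L)
  : Prop :=
    inhabited (carrier M) /\
      (forall x y, pdist M x y = 0 <-> x = y) /\
      (forall x y, pdist M x y = pdist M y x) /\
      (forall x y z, pdist M x z <= pdist M x y + pdist M y z) /\
      (forall x y, 0 <= pdist M x y <= 1) /\
      (forall u : nat -> carrier M,
         (forall e : R, 0 < e -> exists N : nat, forall m n : nat,
            (N <= m)%N -> (N <= n)%N -> pdist M (u m) (u n) < e) ->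
         exists x, forall e : R, 0 < e -> exists N : nat, forall n : nat,
            (N <= n)%N -> pdist M (u n) x < e) /\
      (forall (F : func_sym L) (a b : 'I_(farity F) -> carrier M),
         pdist M (finterp M F a) (finterp M F b) <= flip F * tdist a b) /\
      (forall (P : rel_sym L) (a : 'I_(rarity P) -> carrier M),
         0 <= rinterp M P a <= 1) /\
      (forall (P : rel_sym L) (a b : 'I_(rarity P) -> carrier M),
         rinterp M P a - rinterp M P b <= rlip P * tdist a b).

Record structure (R : realType) (L : language R) := Structure {
  struct_pre :> prestructure L;
  struct_ax : is_structure struct_pre
}.

Inductive term (R : realType) (L : language R) : Type :=
  | Tvar : nat -> term L
  | Tconst : const_sym L -> term L
  | Tapp (F : func_sym L) : ('I_(farity F) -> term L) -> term L.

Inductive formula (R : realType) (L : language R) : Type :=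
  | Fone : formula L
  | Fdist : term L -> term L -> formula L
  | Frel (P : rel_sym L) : ('I_(rarity P) -> term L) -> formula L
  | Fadd : formula L -> formula L -> formula L
  | Fscale : R -> formula L -> formula L
  | Fsup : nat -> formula L -> formula L
  | Finf : nat -> formula L -> formula L.

Fixpoint teval (R : realType) (L : language R) (M : prestructure L)
  (e : nat -> carrier M) (t : term L) : carrier M :=
  match t with
  | Tvar x => e x
  | Tconst c => cinterp M c
  | Tapp F ts => finterp M F (fun k => teval e (ts k))
  end.

Definition upd (T : Type) (e : nat -> T) (x : nat) (m : T) : nat -> T :=
  fun y => if y == x then m else e y.

Fixpoint feval (R : realType) (L : language R) (M : prestructure L)
  (phi : formula L) : (nat -> carrier M) -> R :=
  match phi with
  | Fone => fun _ => 1
  | Fdist t1 t2 => fun e => pdist M (teval e t1) (teval e t2)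
  | Frel P ts => fun e => rinterp M P (fun k => teval e (ts k))
  | Fadd p q => fun e => feval p e + feval q e
  | Fscale r p => fun e => r * feval p e
  | Fsup x p => fun e => sup [set feval p (upd e x m) | m in [set: carrier M]]
  | Finf x p => fun e => inf [set feval p (upd e x m) | m in [set: carrier M]]
  end.

Arguments teval {R L} M e t.
Arguments feval {R L} M phi.

Section Ultramean.
Variables (R : realType) (L : language R) (I : Type) (mu : ultracharge R I)
  (M : I -> structure L).

Definition prodT := forall i : I, carrier (M i).

Definition prod_dist (a b : prodT) : R :=
  integral mu (fun i => pdist (M i) (a i) (b i)).

Definition um_class_set (a : prodT) : set prodT :=
  [set b | prod_dist a b = 0].

Definition um_carrier : Type :=
  {S : set prodT | exists a : prodT, S = um_class_set a}.

Definition um_class (a : prodT) : um_carrier :=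
  exist _ (um_class_set a) (ex_intro _ a erefl).

Definition um_rep (xi : um_carrier) : prodT := projT1 (cid (proj2_sig xi)).

Definition ultramean : prestructure L := @Prestructure R L um_carrier
  (fun xi eta => prod_dist (um_rep xi) (um_rep eta))
  (fun c => um_class (fun i => cinterp (M i) c))
  (fun F xis => um_class (fun i => finterp (M i) F (fun k => um_rep (xis k) i)))
  (fun P xis => integral mu (fun i => rinterp (M i) P (fun k => um_rep (xis k) i))).

End Ultramean.

(* Main.v *)
Require Import Defs.
From HB Require Import structures.
From mathcomp Require Import all_boot all_order all_algebra.
From mathcomp Require Import boolp classical_sets reals.
From mathcomp Require Import lra.
Set Implicit Arguments. Unset Strict Implicit. Unset Printing Implicit Defensive.
Import Order.TTheory GRing.Theory Num.Theory.
Local Open Scope classical_set_scope.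
Local Open Scope ring_scope.

Section Integral.
Variables (R : realType) (I : Type) (mu : ultracharge R I).

Definition ind (A : set I) (i : I) : R := if `[< A i >] then 1 else 0.
Definition sf (s : seq (R * set I)) (i : I) : R := \sum_(p <- s) p.1 * ind p.2 i.
Definition sv (s : seq (R * set I)) : R := \sum_(p <- s) p.1 * mu p.2.

Lemma ind1 A i : A i -> ind A i = 1.
Proof. by move=> h; rewrite /ind; case: asboolP. Qed.
Lemma ind0 A i : ~ A i -> ind A i = 0.
Proof. by move=> h; rewrite /ind; case: asboolP. Qed.

Lemma mu_split X A : mu X = mu (X `&` A) + mu (X `&` ~` A).
Proof.
rewrite -uc_add; last by rewrite setIACA setICr setI0.
by rewrite -setIUr setUCr setIT.
Qed.

Lemma mu0 : mu set0 = 0.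
Proof.
have := uc_add mu (A:=set0) (B:=set0); rewrite setU0 setI0 => /(_ erefl) h.
lra.
Qed.

Lemma pos s : forall E c, (forall i, E i -> c <= sf s i) ->
  c * mu E <= \sum_(p <- s) p.1 * mu (p.2 `&` E).
Proof.
elim: s => [|[c0 A0] s IH] E c H.
  rewrite big_nil.
  case: (pselect (exists i, E i)) => [[i Ei]|nE].
    have := H i Ei; rewrite /sf big_nil => hc.
    by rewrite mulr_le0_ge0 // uc_ge0.
  have -> : E = set0 by apply/seteqP; split => i //= Ei; apply: nE; exists i.
  by rewrite mu0 mulr0.
rewrite big_cons /=.
have H1 := IH (E `&` A0) (c - c0).
have H2 := IH (E `&` ~` A0) c.
have e1 : forall i, (E `&` A0) i -> c - c0 <= sf s i.
  move=> i [Ei Ai]; have := H i Ei; rewrite /sf big_cons /= ind1 //; lra.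
have e2 : forall i, (E `&` ~` A0) i -> c <= sf s i.
  move=> i [Ei Ai]; have := H i Ei; rewrite /sf big_cons /= ind0 //; lra.
move: (H1 e1) (H2 e2) => {H1 H2 e1 e2} H1 H2.
rewrite (mu_split E A0).
have -> : \sum_(p <- s) p.1 * mu (p.2 `&` E) =
  \sum_(p <- s) p.1 * mu (p.2 `&` (E `&` A0)) +
  \sum_(p <- s) p.1 * mu (p.2 `&` (E `&` ~` A0)).
  rewrite -big_split /=; apply: eq_bigr => p _.
  by rewrite -mulrDr !setIA -mu_split.
rewrite [A0 `&` E]setIC mulrDr; move: H1; rewrite mulrBl; lra.
Qed.

Lemma sf_cat s t i : sf (s ++ t) i = sf s i + sf t i.
Proof. by rewrite /sf big_cat. Qed.
Lemma sv_cat s t : sv (s ++ t) = sv s + sv t.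
Proof. by rewrite /sv big_cat. Qed.
Definition sc (r : R) (s : seq (R * set I)) := [seq (r * p.1, p.2) | p <- s].
Lemma sf_sc r s i : sf (sc r s) i = r * sf s i.
Proof. by rewrite /sf big_map mulr_sumr; apply: eq_bigr => p _ /=; rewrite mulrA. Qed.
Lemma sv_sc r s : sv (sc r s) = r * sv s.
Proof. by rewrite /sv big_map mulr_sumr; apply: eq_bigr => p _ /=; rewrite mulrA. Qed.

Lemma mono s t : (forall i, sf s i <= sf t i) -> sv s <= sv t.
Proof.
move=> H.
have := @pos (t ++ sc (-1) s) setT 0.
have h : forall i, setT i -> 0 <= sf (t ++ sc (-1) s) i.
  move=> i _; rewrite sf_cat sf_sc; have := H i; lra.
move=> /(_ h); rewrite mul0r big_cat /=.
under eq_bigr do rewrite setIT.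
rewrite big_map /=.
under [X in _ <= _ + X]eq_bigr do rewrite setIT.
rewrite -/(sv t).
have -> : \sum_(j <- s) (-1 * j.1) * mu j.2 = - sv s.
  rewrite /sv -sumrN; apply: eq_bigr => p _; lra.
lra.
Qed.

Lemma sv_eq s t : (forall i, sf s i = sf t i) -> sv s = sv t.
Proof. move=> H; apply/le_anti; rewrite !mono // => i; by rewrite H. Qed.

Definition ps n (A : 'I_n -> set I) (c : 'I_n -> R) : seq (R * set I) :=
  [seq (c k, A k) | k <- enum 'I_n].

Lemma sf_ps n A c i : sf (@ps n A c) i = \sum_(k < n) c k * ind (A k) i.
Proof. by rewrite /sf /ps big_map big_enum. Qed.
Lemma sv_ps n A c : sv (@ps n A c) = \sum_(k < n) c k * mu (A k).
Proof. by rewrite /sv /ps big_map big_enum. Qed.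

Lemma part_sum n (A : 'I_n -> set I) (g : 'I_n -> R) i k :
  is_partition A -> A k i -> \sum_(l < n) g l * ind (A l) i = g k.
Proof.
move=> [D C] Aki; rewrite (bigD1 k) //= ind1 // mulr1 big1 ?addr0 // => l lk.
rewrite ind0 ?mulr0 // => Ali.
have : (A l `&` A k) i by [].
by rewrite D.
Qed.

Lemma part_mu n (A : 'I_n -> set I) : is_partition A -> \sum_(k < n) mu (A k) = 1.
Proof.
move=> P.
have := @sv_eq (ps A (fun _ => 1)) [:: (1, setT)].
rewrite sv_ps /sv big_cons big_nil /= mul1r addr0 uc_setT.
under eq_bigr do rewrite mul1r.
apply => i; rewrite sf_ps /sf big_cons big_nil /= ind1 // mulr1 addr0.
by case: (P.2 i) => k Ak; rewrite (part_sum _ P Ak).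
Qed.

Definition bnd (f : I -> R) := exists B : R, forall i, `|f i| <= B.

Definition LS (f : I -> R) := [set s | exists (n : nat) (A : 'I_n -> set I) (c : 'I_n -> R),
      [/\ is_partition A,
          (forall (k : 'I_n) (i : I), A k i -> c k <= f i) &
          s = \sum_(k < n) c k * mu (A k)]].

Lemma integralE f : integral mu f = sup (LS f).
Proof. by []. Qed.

Lemma LS_seq f l : LS f l -> exists s, (forall i, sf s i <= f i) /\ sv s = l.
Proof.
move=> [n [A [c [P H ->]]]]; exists (ps A c); split; last by rewrite sv_ps.
move=> i; rewrite sf_ps; case: (P.2 i) => k Ak; rewrite (part_sum _ P Ak).
exact: H.
Qed.

Lemma grid f (e : R) : bnd f -> 0 < e -> exists n (A : 'I_n -> set I) (c : 'I_n -> R),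
  is_partition A /\ forall k i, A k i -> c k <= f i /\ f i <= c k + e.
Proof.
move=> [B HB] e0.
pose x i := (f i + `|B|) / e.
have x0 : forall i, 0 <= x i.
  move=> i; rewrite /x; apply: divr_ge0; last exact: ltW.
  have := HB i; have := ler_norm B; move: (f i) => y.
  rewrite ler_norml => h1 /andP[h2 h3]; lra.
pose n := (Num.truncn (2 * `|B| / e)).+1.
have lt : forall i, (Num.truncn (x i) < n)%N.
  move=> i; rewrite ltnS; apply: le_truncn.
  rewrite /x ler_pM2r ?invr_gt0 //.
  have := HB i; have := ler_norm B; move: (f i) => y.
  rewrite ler_norml => h1 /andP[h2 h3]; lra.
exists n, (fun k => [set i | Num.truncn (x i) = k]), (fun k => (k : nat)%:R * e - `|B|).
split.
  split.
    move=> k l kl; apply/seteqP; split => i //= [h1 h2].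
    by move: kl; rewrite -(inj_eq val_inj) /= -h1 -h2 eqxx.
  by move=> i; exists (Ordinal (lt i)).
move=> k i /= hk; have := truncn_itv (x0 i); rewrite hk => /andP[h1 h2].
move: h1 h2; rewrite /x ler_pdivlMr // ltr_pdivrMr // => h1 h2.
rewrite -natr1 mulrDl mul1r in h2.
split; lra.
Qed.

Lemma grid2 f (e : R) : bnd f -> 0 < e -> exists s t,
  [/\ forall i, sf s i <= f i, forall i, f i <= sf t i, sv t = sv s + e & LS f (sv s)].
Proof.
move=> bf e0; have [n [A [c [P H]]]] := grid bf e0.
exists (ps A c), (ps A (fun k => c k + e)); split.
- move=> i; rewrite sf_ps; case: (P.2 i) => k Ak; rewrite (part_sum _ P Ak).
  by case: (H k i Ak).
- move=> i; rewrite sf_ps; case: (P.2 i) => k Ak; rewrite (part_sum _ P Ak).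
  by case: (H k i Ak).
- rewrite !sv_ps; under eq_bigr do rewrite mulrDl.
  by rewrite big_split /= -mulr_sumr part_mu // mulr1.
- exists n, A, c; split => //; last by rewrite sv_ps.
  by move=> k i Ak; case: (H k i Ak).
Qed.

Lemma LS_ub f t : (forall i, f i <= sf t i) -> ubound (LS f) (sv t).
Proof.
move=> Ht l /LS_seq [s [Hs <-]]; apply: mono => i; exact: le_trans (Hs i) (Ht i).
Qed.

Lemma int_upper f t : bnd f -> (forall i, f i <= sf t i) -> integral mu f <= sv t.
Proof.
move=> bf Ht; rewrite integralE; apply: ge_sup; last exact: LS_ub.
have [s [t0 [_ _ _ hs]]] := grid2 bf ltr01; by exists (sv s).
Qed.

Lemma int_lower f s : bnd f -> (forall i, sf s i <= f i) -> sv s <= integral mu f.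
Proof.
move=> bf Hs; apply/ler_addgt0Pr => e e0.
have [s0 [t0 [h1 h2 h3 h4]]] := grid2 bf e0.
apply: (@le_trans _ _ (sv t0)).
  apply: mono => i; exact: le_trans (Hs i) (h2 i).
rewrite h3 lerD2r integralE.
apply: sup_upper_bound => //; split; first by exists (sv s0).
by exists (sv t0); apply: LS_ub.
Qed.

Lemma int_char f v : bnd f ->
  (forall s, (forall i, sf s i <= f i) -> sv s <= v) ->
  (forall t, (forall i, f i <= sf t i) -> v <= sv t) -> integral mu f = v.
Proof.
move=> bf Hs Ht; apply/le_anti/andP; split.
  rewrite integralE; apply: ge_sup.
    have [s [t0 [_ _ _ hs]]] := grid2 bf ltr01; by exists (sv s).
  by move=> l /LS_seq [s [h <-]]; apply: Hs.
apply/ler_addgt0Pr => e e0.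
have [s0 [t0 [h1 h2 h3 h4]]] := grid2 bf e0.
apply: (le_trans (Ht _ h2)); rewrite h3 lerD2r; exact: int_lower.
Qed.

Lemma approx f (e : R) : bnd f -> 0 < e ->
  (exists t, (forall i, f i <= sf t i) /\ sv t <= integral mu f + e) /\
  (exists s, (forall i, sf s i <= f i) /\ integral mu f - e <= sv s).
Proof.
move=> bf e0; have [s0 [t0 [h1 h2 h3 h4]]] := grid2 bf e0.
split.
  exists t0; split => //; rewrite h3 lerD2r; exact: int_lower.
exists s0; split => //; have := int_upper bf h2; rewrite h3; lra.
Qed.

Lemma le_epsk (x y k : R) : 0 <= k -> (forall e, 0 < e -> x <= y + k * e) -> x <= y.
Proof.
move=> k0 H; apply/ler_addgt0Pr => e e0.
have k1 : 0 < k + 1 by lra.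
have := H (e / (k + 1)) (divr_gt0 e0 k1).
have : k * (e / (k + 1)) <= e.
  rewrite mulrA ler_pdivrMr // mulrDr mulr1; nra.
lra.
Qed.

Lemma bnd_add f g : bnd f -> bnd g -> bnd (fun i => f i + g i).
Proof.
move=> [B hB] [C hC]; exists (B + C) => i.
exact: le_trans (ler_normD _ _) (lerD (hB i) (hC i)).
Qed.
Lemma bnd_scale r f : bnd f -> bnd (fun i => r * f i).
Proof.
move=> [B hB]; exists (`|r| * B) => i; rewrite normrM ler_wpM2l //.
Qed.
Lemma bnd_const c : bnd (fun _ => c).
Proof. by exists `|c|. Qed.

Lemma int_add f g : bnd f -> bnd g ->
  integral mu (fun i => f i + g i) = integral mu f + integral mu g.
Proof.
move=> bf bg; apply: int_char; first exact: bnd_add.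
  move=> s Hs; apply: (@le_epsk _ _ 2) => // e e0.
  have [[tf [hf1 hf2]] _] := approx bf e0.
  have [[tg [hg1 hg2]] _] := approx bg e0.
  have : sv s <= sv (tf ++ tg).
    apply: mono => i; rewrite sf_cat; have := Hs i; have := hf1 i; have := hg1 i; lra.
  rewrite sv_cat; lra.
move=> t Ht; apply: (@le_epsk _ _ 2) => // e e0.
have [_ [sf' [hf1 hf2]]] := approx bf e0.
have [_ [sg [hg1 hg2]]] := approx bg e0.
have : sv (sf' ++ sg) <= sv t.
  apply: mono => i; rewrite sf_cat; have := Ht i; have := hf1 i; have := hg1 i; lra.
rewrite sv_cat; lra.
Qed.

Lemma int_scale r f : bnd f -> integral mu (fun i => r * f i) = r * integral mu f.
Proof.
move=> bf; apply: int_char; first exact: bnd_scale.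
  move=> s Hs; apply: (@le_epsk _ _ `|r|) => // e e0.
  have [[t [ht1 ht2]] [s' [hs1 hs2]]] := approx bf e0.
  case: (lerP 0 r) => r0.
    have : sv s <= sv (sc r t).
      apply: mono => i; rewrite sf_sc; apply: (le_trans (Hs i)).
      by rewrite ler_wpM2l.
    rewrite sv_sc ger0_norm //; nra.
  have : sv s <= sv (sc r s').
    apply: mono => i; rewrite sf_sc; apply: (le_trans (Hs i)).
    by rewrite ler_wnM2l // ltW.
  rewrite sv_sc ltr0_norm //; nra.
move=> t Ht; apply: (@le_epsk _ _ `|r|) => // e e0.
have [[t' [ht1 ht2]] [s' [hs1 hs2]]] := approx bf e0.
case: (lerP 0 r) => r0.
  have : sv (sc r s') <= sv t.
    apply: mono => i; rewrite sf_sc; apply: (le_trans _ (Ht i)).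
    by rewrite ler_wpM2l.
  rewrite sv_sc ger0_norm //; nra.
have : sv (sc r t') <= sv t.
  apply: mono => i; rewrite sf_sc; apply: (le_trans _ (Ht i)).
  by rewrite ler_wnM2l // ltW.
rewrite sv_sc ltr0_norm //; nra.
Qed.

Lemma sf1 c i : sf [:: (c, setT)] i = c.
Proof. by rewrite /sf big_cons big_nil /= ind1 // mulr1 addr0. Qed.
Lemma sv1 c : sv [:: (c, setT)] = c.
Proof. by rewrite /sv big_cons big_nil uc_setT /= mulr1 addr0. Qed.

Lemma int_const c : integral mu (fun _ => c) = c.
Proof.
apply: int_char; first exact: bnd_const.
  move=> s Hs; rewrite -(sv1 c); apply: mono => i; rewrite sf1; exact: Hs.
move=> t Ht; rewrite -(sv1 c); apply: mono => i; rewrite sf1; exact: Ht.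
Qed.

Lemma int_mono f g : bnd f -> bnd g -> (forall i, f i <= g i) ->
  integral mu f <= integral mu g.
Proof.
move=> bf bg H; apply/ler_addgt0Pr => e e0.
have [_ [s [h1 h2]]] := approx bf e0.
have : sv s <= integral mu g.
  apply: int_lower => // i; exact: le_trans (h1 i) (H i).
lra.
Qed.

Lemma bnd_sum n (g : 'I_n -> I -> R) : (forall k, bnd (g k)) ->
  bnd (fun i => \sum_(k < n) g k i).
Proof.
move=> H; have [B HB] := choice H.
exists (\sum_(k < n) B k) => i.
apply: le_trans (ler_norm_sum _ _ _) _; apply: ler_sum => k _; exact: HB.
Qed.

Lemma int_sum n (g : 'I_n -> I -> R) : (forall k, bnd (g k)) ->
  integral mu (fun i => \sum_(k < n) g k i) = \sum_(k < n) integral mu (g k).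
Proof.
elim: n g => [|n IH] g H.
  rewrite big_ord0.
  have -> : (fun i => \sum_(k < 0) g k i) = fun _ => 0 by apply: funext => i; rewrite big_ord0.
  exact: int_const.
have -> : (fun i => \sum_(k < n.+1) g k i) = fun i => \sum_(k < n) g (widen_ord (leqnSn n) k) i + g ord_max i.
  by apply: funext => i; rewrite big_ord_recr.
rewrite int_add; last by []; last exact: (bnd_sum (fun k => H _)).
by rewrite big_ord_recr /= IH.
Qed.

Lemma int_opp f : bnd f -> integral mu (fun i => - f i) = - integral mu f.
Proof.
move=> bf; have := int_scale (-1) bf; rewrite mulN1r => <-.
by congr integral; apply: funext => i; rewrite mulN1r.
Qed.

End Integral.

Section Ultra.
Variables (R : realType) (L : language R) (I : Type) (mu : ultracharge R I)
  (M : I -> structure L).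

Lemma d_ge0 (N : structure L) (x y : carrier N) : 0 <= pdist N x y.
Proof. by case: (struct_ax N) => _ [_ [_ [_ [h _]]]]; case/andP: (h x y). Qed.
Lemma d_le1 (N : structure L) (x y : carrier N) : pdist N x y <= 1.
Proof. by case: (struct_ax N) => _ [_ [_ [_ [h _]]]]; case/andP: (h x y). Qed.
Lemma d_sym (N : structure L) (x y : carrier N) : pdist N x y = pdist N y x.
Proof. by case: (struct_ax N) => _ [_ [h _]]. Qed.
Lemma d_tri (N : structure L) (x y z : carrier N) :
  pdist N x z <= pdist N x y + pdist N y z.
Proof. by case: (struct_ax N) => _ [_ [_ [h _]]]. Qed.
Lemma d_xx (N : structure L) (x : carrier N) : pdist N x x = 0.
Proof. by case: (struct_ax N) => _ [h _]; apply/h. Qed.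
Lemma f_lip (N : structure L) F (a b : 'I_(farity F) -> carrier N) :
  pdist N (finterp N F a) (finterp N F b) <= flip F * tdist a b.
Proof. by case: (struct_ax N) => _ [_ [_ [_ [_ [_ [h _]]]]]]. Qed.
Lemma r_bnd (N : structure L) P (a : 'I_(rarity P) -> carrier N) :
  0 <= rinterp N P a <= 1.
Proof. by case: (struct_ax N) => _ [_ [_ [_ [_ [_ [_ [h _]]]]]]]. Qed.
Lemma r_lip (N : structure L) P (a b : 'I_(rarity P) -> carrier N) :
  rinterp N P a - rinterp N P b <= rlip P * tdist a b.
Proof. by case: (struct_ax N) => _ [_ [_ [_ [_ [_ [_ [_ h]]]]]]]. Qed.
Lemma inh_ex (N : structure L) : exists x : carrier N, True.
Proof. by case: (struct_ax N) => -[x] _; exists x. Qed.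

Local Notation pd := (@prod_dist R L I mu M).
Local Notation cl := (@um_class R L I mu M).
Local Notation UM := (ultramean mu M).

Lemma bnd01 (f : I -> R) : (forall i, 0 <= f i <= 1) -> bnd f.
Proof.
move=> h; exists 1 => i; have /andP[h1 h2] := h i; rewrite ger0_norm //.
Qed.

Lemma d_bnd (a b : prodT M) : bnd (fun i => pdist (M i) (a i) (b i)).
Proof. by apply: bnd01 => i; rewrite d_ge0 d_le1. Qed.

Lemma pd_ge0 a b : 0 <= pd a b.
Proof.
rewrite /prod_dist -(int_const mu 0); apply: int_mono => //.
  exact: bnd_const. exact: d_bnd. by move=> i; apply: d_ge0.
Qed.

Lemma pd_xx a : pd a a = 0.
Proof.
rewrite /prod_dist -(int_const mu 0); congr integral; apply: funext => i.
exact: d_xx.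
Qed.

Lemma pd_sym a b : pd a b = pd b a.
Proof. rewrite /prod_dist; congr integral; apply: funext => i; exact: d_sym. Qed.

Lemma pd_tri a b c : pd a c <= pd a b + pd b c.
Proof.
rewrite /prod_dist -int_add; try exact: d_bnd.
apply: int_mono; try exact: d_bnd; first by apply: bnd_add; exact: d_bnd.
move=> i; exact: d_tri.
Qed.

Lemma pd_congr a a' b b' : pd a a' = 0 -> pd b b' = 0 -> pd a' b' = pd a b.
Proof.
move=> h1 h2; apply/le_anti/andP; split.
  have := pd_tri a' a b'; have := pd_tri a b b'; rewrite (pd_sym a' a); lra.
have := pd_tri a a' b; have := pd_tri a' b' b; rewrite (pd_sym b' b); lra.
Qed.

Lemma exist_eq (T : Type) (P : T -> Prop) (x y : T) (p : P x) (q : P y) :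
  x = y -> exist P x p = exist P y q.
Proof. by move=> E; subst y; congr exist; exact: Prop_irrelevance. Qed.

Lemma cl_eq a b : pd a b = 0 -> cl a = cl b.
Proof.
move=> h.
have E : um_class_set mu a = um_class_set mu b.
  apply/seteqP; split => c; rewrite /um_class_set /= => hc.
    have := pd_tri b a c; have := pd_ge0 b c; rewrite (pd_sym b a) h hc; lra.
  have := pd_tri a b c; have := pd_ge0 a c; rewrite h hc; lra.
rewrite /um_class; exact: exist_eq.
Qed.

Lemma rep_cl a : pd a (um_rep (cl a)) = 0.
Proof.
rewrite /um_rep; case: (cid _) => b /= hb.
have : um_class_set mu b b by rewrite /um_class_set /= pd_xx.
by rewrite -hb.
Qed.

Lemma rep_cl' a : pd (um_rep (cl a)) a = 0.
Proof. by rewrite pd_sym rep_cl. Qed.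

Lemma cl_rep (xi : um_carrier mu M) : xi = cl (um_rep xi).
Proof.
case: xi => S p; rewrite /um_rep /=; case: (cid p) => b hb /=.
subst S; rewrite /um_class; congr exist; exact: Prop_irrelevance.
Qed.

Lemma lip0 n (b b' : 'I_n -> prodT M) (lam : R) :
  (forall k, pd (b k) (b' k) = 0) ->
  integral mu (fun i => lam * \sum_(k < n) pdist (M i) (b k i) (b' k i)) = 0.
Proof.
move=> h; rewrite int_scale; last by apply: bnd_sum => k; exact: d_bnd.
rewrite (@int_sum _ _ _ _ (fun k i => pdist (M i) (b k i) (b' k i))); last first.
  move=> k; exact: d_bnd.
by rewrite big1 ?mulr0 // => k _; apply: h.
Qed.

Lemma finterp_um F (xs : 'I_(farity F) -> prodT M) :
  finterp UM F (fun k => cl (xs k)) =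
  cl (fun i => finterp (M i) F (fun k => xs k i)).
Proof.
apply: cl_eq; apply/le_anti/andP; split; last exact: pd_ge0.
rewrite -(@lip0 _ (fun k => um_rep (cl (xs k))) xs (flip F)); last first.
  move=> k; exact: rep_cl'.
apply: int_mono; first exact: d_bnd.
  apply: bnd_scale; apply: bnd_sum => k; exact: d_bnd.
move=> i; exact: f_lip.
Qed.

Lemma teval_um (a : nat -> prodT M) t :
  teval UM (fun k => cl (a k)) t = cl (fun i => teval (M i) (fun k => a k i) t).
Proof.
move: t; fix IH 1 => t; case: t => [x| c | F ts]; [reflexivity | reflexivity | ].
change (finterp UM F (fun k => teval UM (fun k => cl (a k)) (ts k)) =
  cl (fun i => teval (M i) (fun k => a k i) (Tapp ts))).
have -> : (fun k => teval UM (fun k => cl (a k)) (ts k)) =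
   (fun k => cl (fun i => teval (M i) (fun k => a k i) (ts k))).
  apply: funext => k; exact: IH.
by rewrite finterp_um.
Qed.

Lemma r_bnd' P (xs : 'I_(rarity P) -> prodT M) :
  bnd (fun i => rinterp (M i) P (fun k => xs k i)).
Proof. apply: bnd01 => i; exact: r_bnd. Qed.

Lemma rinterp_um P (xs : 'I_(rarity P) -> prodT M) :
  integral mu (fun i => rinterp (M i) P (fun k => um_rep (cl (xs k)) i)) =
  integral mu (fun i => rinterp (M i) P (fun k => xs k i)).
Proof.
have b1 := r_bnd' (fun k => um_rep (cl (xs k))).
have b2 := r_bnd' xs.
apply/le_anti/andP; split.
  have := @lip0 _ (fun k => um_rep (cl (xs k))) xs (rlip P) (fun k => rep_cl' _).
  set h := (fun i => _) => h0.
  have bh : bnd h by apply: bnd_scale; apply: bnd_sum => k; exact: d_bnd.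
  have := @int_mono _ _ mu _ (fun i => rinterp (M i) P (fun k => xs k i) + h i) b1
     (bnd_add b2 bh).
  rewrite int_add // h0 addr0; apply => i.
  have := r_lip (fun k => um_rep (cl (xs k)) i) (fun k => xs k i).
  rewrite /h /tdist; lra.
have := @lip0 _ xs (fun k => um_rep (cl (xs k))) (rlip P) (fun k => rep_cl _).
set h := (fun i => _) => h0.
have bh : bnd h by apply: bnd_scale; apply: bnd_sum => k; exact: d_bnd.
have := @int_mono _ _ mu _ (fun i => rinterp (M i) P (fun k => um_rep (cl (xs k)) i) + h i) b2
   (bnd_add b1 bh).
rewrite int_add // h0 addr0; apply => i.
have := r_lip (fun k => xs k i) (fun k => um_rep (cl (xs k)) i).
rewrite /h /tdist; lra.
Qed.

Fixpoint fB (phi : formula L) : R :=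
  match phi with
  | Fone => 1 | Fdist _ _ => 1 | Frel _ _ => 1
  | Fadd p q => fB p + fB q
  | Fscale r p => `|r| * fB p
  | Fsup _ p => fB p | Finf _ p => fB p
  end.

Lemma supB (S : set R) (B : R) : S !=set0 -> (forall x, S x -> `|x| <= B) ->
  `|sup S| <= B.
Proof.
move=> [x0 Sx0] H; have hs : has_sup S.
  split; first by exists x0.
  by exists B => y /H; move/(le_trans (ler_norm y)).
rewrite ler_norml; apply/andP; split.
  have := sup_upper_bound hs Sx0; have := H _ Sx0; rewrite ler_norml => /andP[h1 _].
  lra.
apply: ge_sup; first by exists x0.
by move=> y /H; move/(le_trans (ler_norm y)).
Qed.

Lemma img_opp (T : Type) (f : T -> R) (A : set T) :
  -%R @` [set f m | m in A] = [set - f m | m in A].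
Proof.
apply/seteqP; split => v /=.
  by case=> w [m Am <-] <-; exists m.
by case=> m Am <-; exists (f m) => //; exists m.
Qed.

Lemma fbound (N : structure L) phi : forall e, `|feval N phi e| <= fB phi.
Proof.
elim: phi => [|t1 t2|P ts|p IHp q IHq|r p IHp|x p IHp|x p IHp] e /=.
- by rewrite normr1.
- by rewrite ger0_norm ?d_ge0 ?d_le1.
- by have /andP[h1 h2] := r_bnd (fun k => teval N e (ts k)); rewrite ger0_norm.
- exact: le_trans (ler_normD _ _) (lerD (IHp e) (IHq e)).
- by rewrite normrM ler_wpM2l.
- apply: supB; last by move=> v [m _ <-].
  by have [m _] := inh_ex N; exists (feval N p (upd e x m)), m.
- rewrite /inf normrN img_opp; apply: supB; last by move=> v [m _ <-]; rewrite normrN.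
  by have [m _] := inh_ex N; exists (- feval N p (upd e x m)), m.
Qed.

Lemma bndF phi (a : nat -> prodT M) : bnd (fun i => feval (M i) phi (fun k => a k i)).
Proof. by exists (fB phi) => i; apply: fbound. Qed.

Lemma sup_int (f : forall i, carrier (M i) -> R) (B : R) :
  (forall i m, `|f i m| <= B) ->
  sup [set integral mu (fun i => f i (b i)) | b in @setT (prodT M)] =
  integral mu (fun i => sup [set f i m | m in setT]).
Proof.
move=> hB.
have hi : forall i, has_sup [set f i m | m in setT].
  move=> i; split.
    by have [m _] := inh_ex (M i); exists (f i m), m.
  by exists B => y [m _ <-]; apply: le_trans (ler_norm _) (hB i m).
have bH : bnd (fun i => sup [set f i m | m in setT]).
  exists B => i; apply: supB; last by move=> v [m _ <-].
  by have [m _] := inh_ex (M i); exists (f i m), m.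
have bf : forall b : prodT M, bnd (fun i => f i (b i)).
  by move=> b; exists B => i.
have b0 : prodT M := fun i => projT1 (cid (inh_ex (M i))).
have hs : has_sup [set integral mu (fun i => f i (b i)) | b in @setT (prodT M)].
  split; first by exists (integral mu (fun i => f i (b0 i))), b0.
  exists B => y [b _ <-]; rewrite -(int_const mu B); apply: int_mono => //.
    exact: bnd_const.
  by move=> i; apply: le_trans (ler_norm _) (hB i (b i)).
apply/le_anti/andP; split.
  apply: ge_sup; first by exists (integral mu (fun i => f i (b0 i))), b0.
  move=> y [b _ <-]; apply: int_mono => // i.
  by apply: (sup_upper_bound (hi i)); exists (b i).
apply/ler_addgt0Pr => e e0.
have ex : forall i, exists m, sup [set f i m | m in setT] - e < f i m.
  move=> i; have [v [m _ <-] hv] := sup_adherent e0 (hi i); by exists m.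
pose b : prodT M := fun i => projT1 (cid (ex i)).
have Hb : forall i, sup [set f i m | m in setT] - e < f i (b i).
  by move=> i; rewrite /b; case: (cid (ex i)).
have : integral mu (fun i => sup [set f i m | m in setT] + (- e)) <=
       integral mu (fun i => f i (b i)).
  apply: int_mono => //; first by apply: bnd_add => //; exact: bnd_const.
  by move=> i; apply: ltW; apply: Hb.
rewrite int_add //; last exact: bnd_const.
rewrite int_const => h.
have : integral mu (fun i => f i (b i)) <=
  sup [set integral mu (fun i => f i (b i)) | b in @setT (prodT M)].
  by apply: sup_upper_bound => //; exists b.
lra.
Qed.

Lemma inf_int (f : forall i, carrier (M i) -> R) (B : R) :
  (forall i m, `|f i m| <= B) ->
  inf [set integral mu (fun i => f i (b i)) | b in @setT (prodT M)] =
  integral mu (fun i => inf [set f i m | m in setT]).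
Proof.
move=> hB; rewrite /inf img_opp.
have -> : [set - integral mu (fun i => f i (m i)) | m in @setT (prodT M)] =
  [set integral mu (fun i => - f i (m i)) | m in @setT (prodT M)].
  apply/seteqP; split => v [m _ <-]; exists m => //; rewrite int_opp //;
  by exists B => i.
rewrite (@sup_int (fun i m => - f i m) B); last by move=> i m; rewrite normrN.
rewrite -int_opp; last first.
  exists B => i; apply: supB; last by move=> v [m _ <-]; rewrite normrN.
  by have [m _] := inh_ex (M i); exists (- f i m), m.
by congr integral; apply: funext => i; rewrite img_opp.
Qed.

Lemma upd_cl (a : nat -> prodT M) x (b : prodT M) :
  upd (fun k => cl (a k)) x (cl b) = fun k => cl (upd a x b k).
Proof. by apply: funext => y; rewrite /upd; case: eqP. Qed.

Lemma upd_i (a : nat -> prodT M) x (b : prodT M) i :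
  (fun k => upd a x b k i) = upd (fun k => a k i) x (b i).
Proof. by apply: funext => y; rewrite /upd; case: eqP. Qed.

Lemma main phi : forall a : nat -> prodT M,
  feval UM phi (fun k => cl (a k)) =
  integral mu (fun i => feval (M i) phi (fun k => a k i)).
Proof.
elim: phi => [|t1 t2|P ts|p IHp q IHq|r p IHp|x p IHp|x p IHp] a.
- by rewrite /= int_const.
- rewrite /= !teval_um; apply: pd_congr; exact: rep_cl.
- rewrite /=.
  rewrite -(rinterp_um (fun k => (fun i => teval (M i) (fun k => a k i) (ts k)))).
  congr integral; apply: funext => i; congr rinterp; apply: funext => k.
  by rewrite teval_um.
- by rewrite /= IHp IHq int_add //; apply: bndF.
- by rewrite /= IHp int_scale //; apply: bndF.
- rewrite /=.
  have -> : [set feval UM p (upd (fun k => cl (a k)) x m) | m in setT] =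
    [set integral mu (fun i => feval (M i) p (upd (fun k => a k i) x (b i)))
       | b in @setT (prodT M)].
    apply/seteqP; split => v [m _ <-].
      exists (um_rep m) => //; have hm := cl_rep m; rewrite [in RHS]hm.
      rewrite upd_cl IHp; congr integral; apply: funext => i; by rewrite upd_i.
    exists (cl m) => //; rewrite upd_cl IHp; congr integral; apply: funext => i.
    by rewrite upd_i.
  apply: (@sup_int (fun i m => feval (M i) p (upd (fun k => a k i) x m)) (fB p)).
  by move=> i m; apply: fbound.
- rewrite /=.
  have -> : [set feval UM p (upd (fun k => cl (a k)) x m) | m in setT] =
    [set integral mu (fun i => feval (M i) p (upd (fun k => a k i) x (b i)))
       | b in @setT (prodT M)].
    apply/seteqP; split => v [m _ <-].
      exists (um_rep m) => //; have hm := cl_rep m; rewrite [in RHS]hm.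
      rewrite upd_cl IHp; congr integral; apply: funext => i; by rewrite upd_i.
    exists (cl m) => //; rewrite upd_cl IHp; congr integral; apply: funext => i.
    by rewrite upd_i.
  apply: (@inf_int (fun i m => feval (M i) p (upd (fun k => a k i) x m)) (fB p)).
  by move=> i m; apply: fbound.
Qed.

End Ultra.

Theorem mainTheorem1 (R : realType) (L : language R) (I : Type)
  (HI : inhabited I) (mu : ultracharge R I) (M : I -> structure L)
  (phi : formula L) (a : nat -> forall i : I, carrier (M i)) :
  feval (ultramean mu M) phi (fun k => @um_class R L I mu M (a k)) =
  integral mu (fun i => feval (M i) phi (fun k => a k i)).
Proof. exact: main. Qed.
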